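(* (i) Let $I$ be any instance with $n$ agents and goods partitioned into categories $C_1,\dots,C_h$ with $m_j=|C_j|$ and cardinality constraints $\kappa=(k_1,\dots,k_h)$, $k_j\ge m_j/n$, ordered so that $\frac{k_1}{m_1}\le\dots\le\frac{k_h}{m_h}$, and with $k_1\le m_1$. Then $$\frac{\text{OPT-USW}(I)}{\max_{\mathcal{A}\in \mathcal{C}_\kappa(I)}\text{USW}(\mathcal{A})}\le\frac{m_1}{k_1}.$$ (ii) For all positive integers $n,k,q$ with $k\mid q$ and $q\le kn$, there is an instance with $n$ agents and $h=n$ categories, each with $m_j=q$ goods and constraint $k_j=k$, for which this ratio equals $\frac{q}{k}=\frac{m_1}{k_1}$.
   Context: Each agent $i$ has an additive utility function $u_i:2^M\to\mathbb{R}_{\ge 0}$ with $u_i(\emptyset)=0$ and $u_i(M)=1$, where $M=C_1\cup\dots\cup C_h$ is the set of goods. An allocation $(A_1,\dots,A_n)$ is a partition of $M$; it is cardinal if $|A_i\cap C_j|\le k_j$ for all $i,j$; $\mathcal{C}_\kappa(I)$ is the set of cardinal allocations. $\text{USW}(\mathcal{A})=\sum_i u_i(A_i)$ and $\text{OPT-USW}(I)$ is its maximum over all allocations. *)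

(* Defs.v *)
From HB Require Import structures.
From mathcomp Require Import all_boot all_order all_algebra.
Set Implicit Arguments. Unset Strict Implicit. Unset Printing Implicit Defensive.
Import Order.TTheory GRing.Theory Num.Theory.
Local Open Scope ring_scope.

(* An instance: agents 'I_n, goods a finite type G, categories 'I_h given by
   cat : G -> 'I_h (so C_j = [set g | cat g == j]), additive utilities given
   by the per-good values u i g (u_i(S) = \sum_(g in S) u i g).
   An allocation (partition of M into A_1..A_n) is a function A : G -> 'I_n
   (A_i = [set g | A g == i]). *)

Definition bundle_util (R : numDomainType) (n : nat) (G : finType)
  (u : 'I_n -> G -> R) (i : 'I_n) (S : {set G}) : R :=
  \sum_(g in S) u i g.

Definition bundle (n : nat) (G : finType) (A : {ffun G -> 'I_n}) (i : 'I_n)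
  : {set G} := [set g | A g == i].

Definition category (h : nat) (G : finType) (cat : G -> 'I_h) (j : 'I_h)
  : {set G} := [set g | cat g == j].

Definition normalized_utils (R : numDomainType) (n : nat) (G : finType)
  (u : 'I_n -> G -> R) : Prop :=
  (forall i g, 0 <= u i g) /\ (forall i, bundle_util u i [set: G] = 1).

Definition USW (R : numDomainType) (n : nat) (G : finType)
  (u : 'I_n -> G -> R) (A : {ffun G -> 'I_n}) : R :=
  \sum_(i < n) bundle_util u i (bundle A i).

Definition cardinal (n h : nat) (G : finType) (cat : G -> 'I_h)
  (k : 'I_h -> nat) (A : {ffun G -> 'I_n}) : bool :=
  [forall i : 'I_n, forall j : 'I_h,
     #|bundle A i :&: category cat j| <= k j]%N.

(* USW >= 0 for nonnegative utilities, so 0 is a harmless seed for the max *)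
Definition OPT_USW (R : realDomainType) (n : nat) (G : finType)
  (u : 'I_n -> G -> R) : R :=
  \big[Num.max/0]_(A : {ffun G -> 'I_n}) USW u A.

Definition max_card_USW (R : realDomainType) (n h : nat) (G : finType)
  (cat : G -> 'I_h) (k : 'I_h -> nat) (u : 'I_n -> G -> R) : R :=
  \big[Num.max/0]_(A : {ffun G -> 'I_n} | cardinal cat k A) USW u A.

(* Main.v *)
Require Import Defs.
From HB Require Import structures.
From mathcomp Require Import all_boot all_order all_algebra.
Set Implicit Arguments. Unset Strict Implicit. Unset Printing Implicit Defensive.
From mathcomp Require Import ring lra zify.
Import Order.TTheory GRing.Theory Num.Theory.
Local Open Scope ring_scope.

Definition W (R : numDomainType) (n : nat) (G : finType)
  (u : 'I_n -> G -> R) (A : {ffun G -> 'I_n}) : R := \sum_g u (A g) g.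

Lemma sum_by_agent (R : numDomainType) (n : nat) (G : finType)
  (u : 'I_n -> G -> R) (A : {ffun G -> 'I_n}) (P : pred G) :
  \sum_(i < n) \sum_(g | (A g == i) && P g) u i g = \sum_(g | P g) u (A g) g.
Proof.
rewrite (partition_big A xpredT) //=; apply: eq_bigr => i _.
rewrite [RHS](eq_bigl (fun g => (A g == i) && P g)); last by move=> g; rewrite andbC.
by apply: eq_bigr => g /andP[/eqP -> _].
Qed.

Lemma USW_W (R : numDomainType) (n : nat) (G : finType)
  (u : 'I_n -> G -> R) (A : {ffun G -> 'I_n}) : USW u A = W u A.
Proof.
rewrite /USW /W -(sum_by_agent u A xpredT); apply: eq_bigr => i _.
by rewrite /bundle_util; apply: eq_bigl => g; rewrite !inE andbT.
Qed.

Lemma USW_cat (R : numDomainType) (n h : nat) (G : finType) (cat : G -> 'I_h)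
  (u : 'I_n -> G -> R) (A : {ffun G -> 'I_n}) j :
  \sum_(i < n) bundle_util u i (bundle A i :&: category cat j)
  = \sum_(g | cat g == j) u (A g) g.
Proof.
rewrite -(sum_by_agent u A (fun g => cat g == j)); apply: eq_bigr => i _.
by rewrite /bundle_util; apply: eq_bigl => g; rewrite !inE.
Qed.

Lemma W_move (R : numDomainType) (n : nat) (G : finType)
  (u : 'I_n -> G -> R) (B : {ffun G -> 'I_n}) g i :
  W u [ffun x => if x == g then i else B x] = W u B + (u i g - u (B g) g).
Proof.
rewrite /W (bigD1 g) //= [in RHS](bigD1 g) //= ffunE eqxx.
rewrite (eq_bigr (fun x => u (B x) x)); last by move=> x /negbTE xg; rewrite ffunE xg.
ring.
Qed.

Definition swp (G : finType) (g h : G) (x : G) :=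
  if x == g then h else if x == h then g else x.

Lemma swpK (G : finType) (g h : G) : involutive (swp g h).
Proof.
move=> x; rewrite /swp.
have [->|xg] := eqVneq x g.
  rewrite eqxx; have [->|hg] := eqVneq h g; first by [].
  by [].
have [->|xh] := eqVneq x h; first by rewrite eqxx.
by rewrite (negbTE xg) (negbTE xh).
Qed.

Lemma W_split2 (R : numDomainType) (G : finType) (f : G -> R) g h :
  g != h -> \sum_x f x = f g + f h + \sum_(x | (x != g) && (x != h)) f x.
Proof.
move=> gh; rewrite (bigD1 g) //= (bigD1 h) /=; last by rewrite eq_sym.
by rewrite addrA.
Qed.

Lemma W_swap (R : numDomainType) (n : nat) (G : finType)
  (u : 'I_n -> G -> R) (B : {ffun G -> 'I_n}) g h : g != h ->
  W u [ffun x => B (swp g h x)] = W u B + (u (B h) g + u (B g) h - u (B g) g - u (B h) h).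
Proof.
move=> gh; rewrite /W !(W_split2 _ gh) !ffunE /swp !eqxx (eq_sym h g) (negbTE gh).
rewrite (eq_bigr (fun x => u (B x) x)); last first.
  by move=> x /andP[/negbTE xg /negbTE xh]; rewrite ffunE /swp xg xh.
ring.
Qed.

Lemma cardP (n h : nat) (G : finType) (cat : G -> 'I_h) (k : 'I_h -> nat)
  (B : {ffun G -> 'I_n}) : cardinal cat k B ->
  forall a b, (#|bundle B a :&: category cat b| <= k b)%N.
Proof. by move=> /forallP H a b; move: (H a) => /forallP; apply. Qed.

Lemma card_move (n h : nat) (G : finType) (cat : G -> 'I_h) (k : 'I_h -> nat)
  (B : {ffun G -> 'I_n}) g i : cardinal cat k B ->
  (#|bundle B i :&: category cat (cat g)| < k (cat g))%N ->
  cardinal cat k [ffun x => if x == g then i else B x].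
Proof.
move=> Bc lt; apply/forallP => a; apply/forallP => b.
have [/andP[/eqP ai /eqP bg]|nab] := boolP ((a == i) && (b == cat g)).
  subst a b; apply: leq_trans lt.
  apply: (leq_trans (subset_leq_card (_ : _ \subset g |: (bundle B i :&: category cat (cat g))))).
    apply/subsetP => x; rewrite !inE ffunE.
    by case: (x == g) => //= /andP[-> ->].
  by rewrite cardsU1; case: (_ \in _).
apply: leq_trans (cardP Bc a b).
apply: subset_leq_card; apply/subsetP => x; rewrite !inE ffunE.
case: (eqVneq x g) => [->|_ //] /andP[/eqP ia /eqP gb].
by move: nab; rewrite ia gb !eqxx.
Qed.

Lemma card_swap (n h : nat) (G : finType) (cat : G -> 'I_h) (k : 'I_h -> nat)
  (B : {ffun G -> 'I_n}) g g' : cardinal cat k B -> cat g = cat g' ->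
  cardinal cat k [ffun x => B (swp g g' x)].
Proof.
move=> Bc cg; apply/forallP => a; apply/forallP => b.
have -> : bundle [ffun x => B (swp g g' x)] a :&: category cat b =
          swp g g' @^-1: (bundle B a :&: category cat b).
  apply/setP => x; rewrite !inE ffunE.
  have -> : cat (swp g g' x) = cat x.
    rewrite /swp; have [->|_] := eqVneq x g; first by rewrite cg.
    by have [->|_] := eqVneq x g'.
  by [].
rewrite card_preimset; first exact: cardP.
exact: (inv_inj (swpK g g')).
Qed.

Lemma per_good (R : realFieldType) (n h : nat) (G : finType) (cat : G -> 'I_h)
  (k : 'I_h -> nat) (u : 'I_n -> G -> R) (B : {ffun G -> 'I_n}) :
  (forall i g, 0 <= u i g) -> cardinal cat k B ->
  (forall B', cardinal cat k B' -> W u B' <= W u B) ->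
  forall g i,
  (k (cat g))%:R * u i g <= (k (cat g))%:R * u (B g) g +
    (if (B g != i) && (#|bundle B i :&: category cat (cat g)| == k (cat g))
     then bundle_util u i (bundle B i :&: category cat (cat g)) else 0).
Proof.
move=> u0 Bc Bmax g i.
have [->|Bgi] := eqVneq (B g) i; first by rewrite /= addr0.
rewrite /=.
set S := bundle B i :&: category cat (cat g).
have [full|nfull] := eqVneq #|S| (k (cat g)).
  have key : forall x, x \in S -> u i g <= u (B g) g + u i x.
    move=> x; rewrite !inE => /andP[/eqP Bx /eqP cx].
    have gx : g != x by apply: contra_neq Bgi => ->.
    have := Bmax _ (card_swap Bc (esym cx)).
    rewrite W_swap // Bx gerDl => H.
    have := u0 (B g) x; lra.
  have H1 : \sum_(x in S) u i g <= \sum_(x in S) (u (B g) g + u i x).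
    by apply: ler_sum.
  move: H1; rewrite big_split; set U := \sum_(x in S) u i x; rewrite !sumr_const.
  by rewrite full -[u i g *+ _]mulr_natl -[u (B g) g *+ _]mulr_natl.
have lt : (#|S| < k (cat g))%N by rewrite ltn_neqAle nfull cardP.
have := Bmax _ (card_move Bc lt); rewrite W_move gerDl subr_le0 => H.
by rewrite addr0 ler_wpM2l.
Qed.

Lemma per_cat (R : realFieldType) (n h : nat) (G : finType) (cat : G -> 'I_h)
  (k : 'I_h -> nat) (u : 'I_n -> G -> R) (B : {ffun G -> 'I_n}) :
  (forall i g, 0 <= u i g) -> cardinal cat k B ->
  (forall B', cardinal cat k B' -> W u B' <= W u B) ->
  forall (A : {ffun G -> 'I_n}) j,
  (k j)%:R * \sum_(g | cat g == j) u (A g) g <=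
  ((k j) + (#|category cat j| - k j))%:R * \sum_(g | cat g == j) u (B g) g.
Proof.
move=> u0 Bc Bmax A j.
set U := fun i => bundle_util u i (bundle B i :&: category cat j).
have U0 : forall i, 0 <= U i by move=> i; apply: sumr_ge0 => x _.
set F := fun g i => if (B g != i) && (#|bundle B i :&: category cat j| == k j)
                    then U i else 0.
have F0 : forall g i, 0 <= F g i by move=> g i; rewrite /F; case: ifP.
have s1 : (k j)%:R * \sum_(g | cat g == j) u (A g) g <=
          \sum_(g | cat g == j) ((k j)%:R * u (B g) g + F g (A g)).
  rewrite mulr_sumr; apply: ler_sum => g /eqP cg.
  by have := per_good u0 Bc Bmax g (A g); rewrite cg.
have s2 : \sum_(g | cat g == j) F g (A g) <= \sum_(g | cat g == j) \sum_i F g i.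
  apply: ler_sum => g _; rewrite (bigD1 (A g)) //= lerDl.
  by apply: sumr_ge0 => i _.
have s3 : forall i, \sum_(g | cat g == j) F g i <= (#|category cat j| - k j)%:R * U i.
  move=> i; rewrite /F.
  case: (eqVneq #|bundle B i :&: category cat j| (k j)) => [full|nfull]; last first.
    rewrite big1; last by move=> g _; rewrite andbF.
    by apply: mulr_ge0.
  under eq_bigr do rewrite andbT.
  rewrite -big_mkcondr.
  rewrite (eq_bigl (fun g => g \in category cat j :\: bundle B i)); last first.
    by move=> g; rewrite !inE andbC.
  rewrite sumr_const -[U i *+ _]mulr_natl.
  have := cardsID (bundle B i) (category cat j).
  rewrite setIC full => <-.
  by rewrite addKn.
have s4 : \sum_(g | cat g == j) \sum_i F g i <=
          (#|category cat j| - k j)%:R * \sum_(g | cat g == j) u (B g) g.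
  rewrite exchange_big /= -USW_cat mulr_sumr.
  by apply: ler_sum => i _; apply: s3.
apply: (le_trans s1); rewrite big_split /= -mulr_sumr natrD mulrDl lerD2l.
exact: le_trans s2 s4.
Qed.

Lemma exists_cardinal (n h : nat) (G : finType) (cat : G -> 'I_h) (k : 'I_h -> nat) :
  (0 < n)%N -> (forall j, #|category cat j| <= n * k j)%N ->
  exists B : {ffun G -> 'I_n}, cardinal cat k B.
Proof.
move=> n0 Hc.
pose rk := fun g => index g (enum (category cat (cat g))).
exists [ffun g => Ordinal (ltn_pmod (rk g) n0)].
apply/forallP => a; apply/forallP => b.
set S := _ :&: _.
rewrite cardE -(size_map (fun g => rk g %/ n)%N) -(size_iota 0 (k b)).
apply: uniq_leq_size.
  rewrite map_inj_in_uniq ?enum_uniq //.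
  move=> g1 g2; rewrite !mem_enum !inE !ffunE => /andP[/eqP a1 /eqP b1] /andP[/eqP a2 /eqP b2] e.
  have er : rk g1 = rk g2.
    rewrite (divn_eq (rk g1) n) (divn_eq (rk g2) n) e.
    by move: a1 a2 => /(congr1 val) /= -> /(congr1 val) /= ->.
  move: er; rewrite /rk b1 b2 => er.
  have m1 : g1 \in enum (category cat b) by rewrite mem_enum inE b1.
  have m2 : g2 \in enum (category cat b) by rewrite mem_enum inE b2.
  by rewrite -(nth_index g1 m1) er (nth_index g1 m2).
move=> x /mapP[g]; rewrite mem_enum !inE => /andP[_ /eqP bg] ->.
rewrite mem_iota add0n /= ltn_divLR // mulnC.
apply: leq_trans (Hc b).
by rewrite /rk bg cardE index_mem mem_enum inE bg.
Qed.

Lemma partI (R : realFieldType) (n h : nat) (G : finType) (cat : G -> 'I_h.+1)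
  (k : 'I_h.+1 -> nat) (u : 'I_n -> G -> R) :
     normalized_utils u ->
     (forall j, 0 < #|category cat j|)%N ->
     (forall j, #|category cat j| <= n * k j)%N ->
     (forall j1 j2 : 'I_h.+1, (j1 <= j2)%N ->
        (k j1 * #|category cat j2| <= k j2 * #|category cat j1|)%N) ->
     (k ord0 <= #|category cat ord0|)%N ->
     OPT_USW u * (k ord0)%:R
       <= (#|category cat ord0|)%:R * max_card_USW cat k u.
Proof.
move=> [u0 _] mpos Hc Hr Hk0.
have n0 : (0 < n)%N.
  by have := leq_trans (mpos ord0) (Hc ord0); rewrite muln_gt0 => /andP[].
have kpos j : (0 < k j)%N.
  by have := leq_trans (mpos j) (Hc j); rewrite muln_gt0 => /andP[].
have [B0 B0c] := exists_cardinal n0 Hc.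
case: (@arg_maxP _ _ _ B0 (fun B => cardinal cat k B) (W u) B0c) => B Bc Bmax.
have Bmax' : forall B', cardinal cat k B' -> W u B' <= W u B by move=> B' /Bmax.
have MB : W u B <= max_card_USW cat k u.
  rewrite -USW_W /max_card_USW.
  exact: (le_bigmax_cond _ (P := fun A => cardinal cat k A) (USW u) Bc).
have W0 : 0 <= W u B by apply: sumr_ge0.
set m0 := #|category cat ord0|.
have main : forall A, USW u A * (k ord0)%:R <= m0%:R * W u B.
  move=> A; rewrite USW_W /W (partition_big cat xpredT) //= mulr_suml.
  rewrite [X in _ <= _ * X](partition_big cat xpredT) //= mulr_sumr.
  apply: ler_sum => j _.
  have := per_cat u0 Bc Bmax' A j.
  set O := \sum_(g | _) u (A g) g.
  set Wj := \sum_(g | _) u (B g) g.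
  have O0 : 0 <= O by apply: sumr_ge0.
  have Wj0 : 0 <= Wj by apply: sumr_ge0.
  set kj := k j; set mj := #|category cat j|; set k0 := k ord0 => H.
  have nf : (k0 * (kj + (mj - kj)) <= m0 * kj)%N.
    have := Hr ord0 j isT; rewrite -/mj -/kj -/k0 -/m0 => Hr'.
    case: (leqP kj mj) => kjm.
      rewrite subnKC //; lia.
    have -> : (mj - kj = 0)%N by apply/eqP; rewrite subn_eq0 ltnW.
    rewrite addn0; have := Hk0; rewrite -/k0 -/m0 => Hk0'; nia.
  have kj0 : 0 < kj%:R :> R by rewrite ltr0n kpos.
  rewrite -(ler_pM2l kj0).
  apply: (le_trans (y := k0%:R * ((kj + (mj - kj))%:R * Wj))).
    by rewrite mulrCA mulrC [kj%:R * _]mulrC -mulrA ler_wpM2l ?ler0n.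
  by rewrite mulrA -natrM mulrA -natrM ler_wpM2r // ler_nat (mulnC kj).
rewrite /OPT_USW.
apply: (big_ind (fun x => x * (k ord0)%:R <= m0%:R * max_card_USW cat k u)).
- by rewrite mul0r mulr_ge0 // (le_trans W0 MB).
- move=> x y Hx Hy; rewrite /Num.max; case: ifP => _ //.
- move=> A _; apply: (le_trans (main A)).
  by rewrite ler_wpM2l.
Qed.

Lemma sum_constT (V: nmodType) (T: finType) (x : V) : \sum_(t : T) x = x *+ #|T|.
Proof. by rewrite sumr_const. Qed.

Lemma partII (R : realFieldType) :
  (forall n kk q : nat, (0 < n)%N -> (0 < kk)%N -> (0 < q)%N ->
     (kk %| q)%N -> (q <= kk * n)%N ->
     exists (G : finType) (cat : G -> 'I_n) (u : 'I_n -> G -> R),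
       normalized_utils u /\
       (forall j, #|category cat j| = q) /\
       0 < max_card_USW cat (fun _ => kk) u /\
       OPT_USW u / max_card_USW cat (fun _ => kk) u = q%:R / kk%:R).
Proof.
move=> [//|n'] kk q _ kk0 q0 kq qn.
set n := n'.+1.
pose G := ('I_n * 'I_q)%type.
pose cat := fun g : G => g.1.
pose c : R := q%:R^-1.
pose u := fun i (g : G) => if g.1 == i then c else 0.
exists G, cat, u.
have qR : q%:R != 0 :> R by rewrite pnatr_eq0 -lt0n.
have c0 : 0 <= c by rewrite invr_ge0 ler0n.
have u0 : forall i g, 0 <= u i g by move=> i g; rewrite /u; case: ifP.
have uc : forall i g, u i g <= c by move=> i g; rewrite /u; case: ifP.
have catq : forall j, #|category cat j| = q.
  move=> j; have -> : category cat j = setX [set j] [set: 'I_q].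
    by apply/setP => -[a b]; rewrite !inE andbT.
  by rewrite cardsX cards1 cardsT card_ord mul1n.
have cq : c *+ q = 1 by rewrite -mulr_natr mulVf.
have norm : normalized_utils u.
  split => // i; rewrite /bundle_util big_mkcond /=.
  rewrite (eq_bigr (fun g => if g \in category cat i then c else 0)); last first.
    by move=> g _; rewrite !inE /u.
  by rewrite -big_mkcond sumr_const catq.
have total : \sum_(g : G) c = n%:R.
  by rewrite sum_constT card_prod !card_ord mulnC mulrnA cq.
have OPTn : OPT_USW u = n%:R.
  apply/le_anti/andP; split.
    rewrite /OPT_USW; apply: bigmax_le => [|A _]; first by rewrite ler0n.
    rewrite USW_W /W -total; apply: ler_sum => g _; exact: uc.
  have := le_bigmax_cond 0 (P := xpredT) (USW u) (j := [ffun g : G => g.1]) isT.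
  rewrite USW_W /W.
  rewrite (eq_bigr (fun _ => c)); last by move=> g _; rewrite ffunE /u eqxx.
  by rewrite total.
set M := max_card_USW cat (fun _ => kk) u.
have Mle : M <= (n * kk)%:R * c.
  rewrite /M /max_card_USW; apply: bigmax_le => [|B Bc].
    by rewrite mulr_ge0 ?ler0n.
  have -> : (n * kk)%:R * c = \sum_(i < n) (c *+ kk).
    by rewrite sum_constT card_ord -mulrnA mulr_natl mulnC.
  rewrite /USW.
  apply: ler_sum => i _; rewrite /bundle_util big_mkcond /=.
  rewrite (eq_bigr (fun g => if g \in bundle B i :&: category cat i then c else 0)); last first.
    by move=> g _; rewrite !inE /u; case: (B g == i).
  rewrite -big_mkcond sumr_const -[c *+ #|_|]mulr_natl -[c *+ kk]mulr_natl.
  by rewrite ler_wpM2r // ler_nat (cardP Bc).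
have Mge : n%:R * kk%:R <= q%:R * M.
  have := @partI R n n' G cat (fun _ => kk) u norm.
  rewrite OPTn catq; apply.
  - by move=> j; rewrite catq.
  - by move=> j; rewrite catq mulnC.
  - by move=> j1 j2 _; rewrite !catq.
  - exact: dvdn_leq.
have qpos : 0 < q%:R :> R by rewrite ltr0n.
have Meq : M = (n * kk)%:R * c.
  apply/le_anti; rewrite Mle /=.
  by rewrite -(ler_pM2l qpos) mulrCA /c mulfV // mulr1 natrM.
have Mpos : 0 < M.
  by rewrite Meq mulr_gt0 ?invr_gt0 // ltr0n muln_gt0 kk0.
split => //; split => //; split => //.
rewrite OPTn Meq natrM /c.
have nR : n%:R != 0 :> R by rewrite pnatr_eq0.
have kR : kk%:R != 0 :> R by rewrite pnatr_eq0 -lt0n.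
by field; rewrite nR kR qR.
Qed.

Theorem theorem4 (R : realFieldType) :
  (* (i) *)
  (forall (n h : nat) (G : finType) (cat : G -> 'I_h.+1)
          (k : 'I_h.+1 -> nat) (u : 'I_n -> G -> R),
     normalized_utils u ->
     (forall j, 0 < #|category cat j|)%N ->
     (forall j, #|category cat j| <= n * k j)%N ->
     (forall j1 j2 : 'I_h.+1, (j1 <= j2)%N ->
        (k j1 * #|category cat j2| <= k j2 * #|category cat j1|)%N) ->
     (k ord0 <= #|category cat ord0|)%N ->
     OPT_USW u * (k ord0)%:R
       <= (#|category cat ord0|)%:R * max_card_USW cat k u)
  /\
  (* (ii) *)
  (forall n kk q : nat, (0 < n)%N -> (0 < kk)%N -> (0 < q)%N ->
     (kk %| q)%N -> (q <= kk * n)%N ->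
     exists (G : finType) (cat : G -> 'I_n) (u : 'I_n -> G -> R),
       normalized_utils u /\
       (forall j, #|category cat j| = q) /\
       0 < max_card_USW cat (fun _ => kk) u /\
       OPT_USW u / max_card_USW cat (fun _ => kk) u = q%:R / kk%:R).
Proof.
split; first by move=> n h G cat k u; exact: partI.
exact: partII.
Qed.
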